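(* Let $X$ be an $L$-space with a convexifying operator $P$, $(T,r)$ a metric compact, $\mu$ a Borel measure on $T$, $\omega$ a modulus of continuity, and $Q\subset T$ a compact set with $\mu(Q)>0$. Then for all $t\in T$ and $f\in H^\omega(T,X)$, $$h_X\Big(P(f(t)),\tfrac{1}{\mu(Q)}\int_Q f(s)\,d\mu(s)\Big)\le\tfrac{1}{\mu(Q)}\int_Q\omega(r(t,s))\,d\mu(s).$$ If $X$ is isotropic and $X^{\rm c}\ne\{\theta\}$, then the inequality is sharp, i.e. for every $t\in T$ the supremum of the left-hand side over $f\in H^\omega(T,X)$ equals the right-hand side.
   Context: Semilinear space: a set $X$ with addition and multiplication by reals such that for all $x,y,z\in X$, $\alpha,\beta\in\mathbb R$: $x+y=y+x$; $x+(y+z)=(x+y)+z$; there is $\theta$ with $x+\theta=x$; $\alpha(x+y)=\alpha x+\alpha y$; $\alpha(\beta x)=(\alpha\beta)x$; $1\cdot x=x$, $0\cdot x=\theta$. $x$ is convex if $(\alpha+\beta)x=\alpha x+\beta x$ for all $\alpha,\beta\ge0$; $X^{\rm c}$ is the set of convex elements. An $L$-space is a semilinear space with a complete separable metric $h_X$ satisfying $h_X(\alpha x,\alpha y)=|\alpha|h_X(x,y)$ and $h_X(x+z,y+z)\le h_X(x,y)$; isotropic if the latter is always an equality. A convexifying operator is a surjective map $P\colon X\to X^{\rm c}$ with $h_X(P(x),P(y))\le h_X(x,y)$, $P\circ P=P$, $P(\alpha x+\beta y)=\alpha P(x)+\beta P(y)$ for all $x,y$, $\alpha,\beta\in\mathbb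 R$. Integral: $f\colon T\to X$ is measurable if $h_X(f(\cdot),x)$ is Borel measurable for each $x$; for a simple bounded $f$ taking the value $f_i$ on pairwise disjoint Borel sets $T_i$ covering $T$, $\int_T f\,d\mu=\sum_i P(f_i)\mu(T_i)$; for a bounded measurable $f$, $\int_Tf\,d\mu$ is the limit of the integrals of any uniformly bounded sequence of simple functions converging to $f$ $\mu$-a.e. (the limit exists and does not depend on the sequence); $\int_Q f\,d\mu=\int_T\chi_Qf\,d\mu$ with $\chi_Q$ the indicator of $Q$. A modulus of continuity is a non-decreasing continuous $\omega\colon[0,\infty)\to[0,\infty)$ with $\omega(0)=0$ and $\omega(a+b)\le\omega(a)+\omega(b)$; $H^\omega(T,X)=\{f\colon T\to X:\ h_X(f(s),f(t))\le\omega(r(s,t))\ \forall s,t\}$. *)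

(* Defs.v *)
From Stdlib Require List.
From HB Require Import structures.
From mathcomp Require Import all_boot all_order all_algebra.
From mathcomp Require Import all_classical all_reals all_analysis.
Set Implicit Arguments. Unset Strict Implicit. Unset Printing Implicit Defensive.
Import Order.TTheory GRing.Theory Num.Theory.
Import numFieldNormedType.Exports.
Local Open Scope classical_set_scope.
Local Open Scope ring_scope.

Section Defs.
Variable R : realType.

Section Semilinear.
Variables (X : Type) (add : X -> X -> X) (smul : R -> X -> X) (theta : X).

Definition semilinear : Prop :=
  [/\ (forall x y, add x y = add y x),
      (forall x y z, add x (add y z) = add (add x y) z),
      (forall x, add x theta = x) &
      (forall x, smul 1 x = x)] /\
  [/\
      (forall (a : R) x y, smul a (add x y) = add (smul a x) (smul a y)),
      (forall (a b : R) x, smul a (smul b x) = smul (a * b) x) &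
      (forall x, smul 0 x = theta)].

Definition convex_elt (x : X) : Prop :=
  forall a b : R, 0 <= a -> 0 <= b -> smul (a + b) x = add (smul a x) (smul b x).

Definition is_metric (Y : Type) (m : Y -> Y -> R) : Prop :=
  [/\ (forall x y, 0 <= m x y),
      (forall x y, m x y = 0 <-> x = y),
      (forall x y, m x y = m y x) &
      (forall x y z, m x z <= m x y + m y z)].

Definition cauchy_seq (Y : Type) (m : Y -> Y -> R) (u : nat -> Y) : Prop :=
  forall e : R, 0 < e -> exists N, forall p q, (N <= p)%N -> (N <= q)%N -> m (u p) (u q) < e.

Definition converges_to (Y : Type) (m : Y -> Y -> R) (u : nat -> Y) (l : Y) : Prop :=
  (fun n => m (u n) l) @ \oo --> (0 : R).

Definition complete_metric (Y : Type) (m : Y -> Y -> R) : Prop :=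
  forall u : nat -> Y, cauchy_seq m u -> exists l, converges_to m u l.

Definition separable_metric (Y : Type) (m : Y -> Y -> R) : Prop :=
  exists dseq : nat -> Y, forall y (e : R), 0 < e -> exists n, m (dseq n) y < e.

Variable h : X -> X -> R.

Definition L_space : Prop :=
  [/\ semilinear, is_metric h, complete_metric h & separable_metric h] /\
  ((forall (a : R) x y, h (smul a x) (smul a y) = `|a| * h x y) /\
      (forall x y z, h (add x z) (add y z) <= h x y)).

Definition isotropic : Prop := forall x y z, h (add x z) (add y z) = h x y.

Definition convexifying (P : X -> X) : Prop :=
  [/\ (forall x, convex_elt (P x)),
      (forall y, convex_elt y -> exists x, P x = y),
      (forall x y, h (P x) (P y) <= h x y),
      (forall x, P (P x) = P x) &
      (forall (a b : R) x y, P (add (smul a x) (smul b y)) = add (smul a (P x)) (smul b (P y)))].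

Variable P : X -> X.
Context (d : measure_display) (T : measurableType d).
Variable mu : {measure set T -> \bar R}.

Definition simple_rep (g : T -> X) (s : seq (X * set T)) : Prop :=
  [/\ (forall p, List.In p s -> measurable p.2),
      (forall i j, (i < size s)%N -> (j < size s)%N -> i <> j ->
          (nth (theta, set0) s i).2 `&` (nth (theta, set0) s j).2 = set0),
      (forall t, exists2 p, List.In p s & p.2 t) &
      (forall t p, List.In p s -> p.2 t -> g t = p.1)].

Definition simple_integral (s : seq (X * set T)) : X :=
  foldr add theta [seq smul (fine (mu p.2)) (P p.1) | p <- s].

Definition Xbounded_fun (f : T -> X) : Prop :=
  exists M : R, forall t, h (f t) theta <= M.

Definition h_measurable (f : T -> X) : Prop :=
  forall x, measurable_fun setT (fun t => h (f t) x).

Definition is_integral_T (f : T -> X) (I : X) : Prop :=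
  forall (g : nat -> T -> X) (s : nat -> seq (X * set T)),
    (forall n, simple_rep (g n) (s n)) ->
    (exists M : R, forall n t, h (g n t) theta <= M) ->
    {ae mu, forall t, converges_to h (fun n => g n t) (f t)} ->
    converges_to h (fun n => simple_integral (s n)) I.

Definition integral_T (f : T -> X) : X :=
  match pselect (exists I, is_integral_T f I) with
  | left e => projT1 (cid e)
  | right _ => theta
  end.

Definition Xintegral (Q : set T) (f : T -> X) : X :=
  integral_T (fun t => smul (\1_Q t) (f t)).

End Semilinear.

Section MetricT.
Variables (T : Type) (r : T -> T -> R).

Definition open_r (A : set T) : Prop :=
  forall t, A t -> exists2 e : R, 0 < e & (forall s, r t s < e -> A s).

Definition compact_r (Q : set T) : Prop :=
  forall (I : Type) (U : I -> set T), (forall i, open_r (U i)) ->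
    Q `<=` \bigcup_i U i -> exists2 F : set I, finite_set F & Q `<=` \bigcup_(i in F) U i.
End MetricT.

Definition modulus_of_continuity (omega : R -> R) : Prop :=
  [/\ (forall a b, 0 <= a -> a <= b -> omega a <= omega b),
      (forall a (e : R), 0 <= a -> 0 < e -> exists2 del : R, 0 < del &
           forall b, 0 <= b -> `|b - a| < del -> `|omega b - omega a| < e),
      (forall a, 0 <= a -> 0 <= omega a),
      omega 0 = 0 &
      (forall a b, 0 <= a -> 0 <= b -> omega (a + b) <= omega a + omega b)].

Definition H_omega (T X : Type) (r : T -> T -> R) (h : X -> X -> R) (omega : R -> R)
    (f : T -> X) : Prop :=
  forall s t, h (f s) (f t) <= omega (r s t).

End Defs.

(* Main.v *)
Require Import Defs.
From HB Require Import structures.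
From mathcomp Require Import all_boot all_order all_algebra.
From mathcomp Require Import all_classical all_reals all_analysis.
From mathcomp Require Import ring lra.
From mathcomp Require Import measurable_realfun.
Import Order.TTheory GRing.Theory Num.Theory.
Local Open Scope classical_set_scope.
Local Open Scope ring_scope.
Set Implicit Arguments. Unset Strict Implicit. Unset Printing Implicit Defensive.
Section Alg.
Variables (R : realType) (X : Type) (add : X -> X -> X) (smul : R -> X -> X) (theta : X) (h : X -> X -> R) (P : X -> X).
Hypothesis addC : forall x y, add x y = add y x.
Hypothesis addA : forall x y z, add x (add y z) = add (add x y) z.
Hypothesis add0 : forall x, add x theta = x.
Hypothesis smul1 : forall x, smul 1 x = x.
Hypothesis smulD : forall (a : R) x y, smul a (add x y) = add (smul a x) (smul a y).
Hypothesis smulM : forall (a b : R) x, smul a (smul b x) = smul (a * b) x.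
Hypothesis smul0 : forall x, smul 0 x = theta.
Hypothesis hge0 : forall x y, 0 <= h x y.
Hypothesis heq0 : forall x y, h x y = 0 <-> x = y.
Hypothesis hC : forall x y, h x y = h y x.
Hypothesis htri : forall x y z, h x z <= h x y + h y z.
Hypothesis hZ : forall (a : R) x y, h (smul a x) (smul a y) = `|a| * h x y.
Hypothesis hT : forall x y z, h (add x z) (add y z) <= h x y.
Hypothesis Pconv : forall x, convex_elt add smul (P x).
Hypothesis Psurj : forall y, convex_elt add smul y -> exists x, P x = y.
Hypothesis PL : forall x y, h (P x) (P y) <= h x y.
Hypothesis PP : forall x, P (P x) = P x.
Hypothesis Plin : forall (a b : R) x y, P (add (smul a x) (smul b y)) = add (smul a (P x)) (smul b (P y)).

Lemma add0l x : add theta x = x. Proof. by rewrite addC add0. Qed.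
HB.instance Definition _ := Monoid.isComLaw.Build X theta add addA addC add0l.

Lemma smulx0 a : smul a theta = theta.
Proof. by rewrite -(smul0 theta) smulM mulr0. Qed.

Lemma hxx x : h x x = 0. Proof. by apply/heq0. Qed.

Lemma P_smul a x : P (smul a x) = smul a (P x).
Proof. by have := Plin a 0 x x; rewrite !smul0 !add0. Qed.

Lemma P_theta : P theta = theta.
Proof. by rewrite -(smul0 theta) P_smul smul0. Qed.

Lemma h_add x1 x2 y1 y2 : h (add x1 x2) (add y1 y2) <= h x1 y1 + h x2 y2.
Proof.
apply: (le_trans (htri _ (add y1 x2) _)); apply: lerD; first exact: hT.
by rewrite ![add y1 _]addC; exact: hT.
Qed.

Lemma h_big (I : Type) (s : seq I) (F G : I -> X) :
  h (\big[add/theta]_(i <- s) F i) (\big[add/theta]_(i <- s) G i) <= \sum_(i <- s) h (F i) (G i).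
Proof.
elim: s => [|i s IH]; first by rewrite !big_nil hxx.
rewrite !big_cons; apply: (le_trans (h_add _ _ _ _)); exact: lerD.
Qed.

Lemma conv_split (x : X) (I : Type) (s : seq I) (b : I -> R) :
  convex_elt add smul x -> (forall i, 0 <= b i) ->
  smul (\sum_(i <- s) b i) x = \big[add/theta]_(i <- s) smul (b i) x.
Proof.
move=> cx b0; elim: s => [|i s IH]; first by rewrite !big_nil smul0.
rewrite !big_cons cx ?IH //; exact: sumr_ge0.
Qed.

Lemma hsmul_pos (a : R) x y : 0 <= a -> h (smul a x) (smul a y) = a * h x y.
Proof. by move=> a0; rewrite hZ ger0_norm. Qed.


Lemma In_nth_ex (A : Type) (x0 : A) (s : seq A) p :
  List.In p s -> exists2 i, (i < size s)%N & nth x0 s i = p.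
Proof.
elim: s => [//|a s IH] /= [->|/IH [i si <-]]; first by exists 0%N.
by exists i.+1.
Qed.

Lemma nth_In (A : Type) (x0 : A) (s : seq A) i :
  (i < size s)%N -> List.In (nth x0 s i) s.
Proof.
elim: s i => [//|a s IH] [|i] //=; first by left.
by move=> si; right; apply: IH.
Qed.

Variables (d : measure_display) (T : measurableType d).
Variable mu : {measure set T -> \bar R}.
Hypothesis muT : (mu setT < +oo)%E.

Lemma mu_fin A : measurable A -> mu A = (fine (mu A))%:E.
Proof.
move=> mA; rewrite fineK // ge0_fin_numE //.
apply: le_lt_trans muT; apply: le_measure => //; rewrite inE //.
Qed.

Lemma part_fun (I : finType) (E : I -> set T) (c : I -> R) (phi : T -> R) :
  (forall i j, i != j -> E i `&` E j = set0) -> (forall t, exists i, E i t) ->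
  (forall i t, E i t -> phi t = c i) ->
  phi = (fun t => \sum_i c i * \1_(E i) t).
Proof.
move=> disj cov cst; apply/funext => t; have [i Eit] := cov t.
rewrite (bigD1 i) //= big1 ?addr0.
  by rewrite indicE mem_set // mulr1 (cst i).
move=> j ji; rewrite indicE memNset ?mulr0 //.
move=> Ejt; have : (E j `&` E i) t by split.
by rewrite disj.
Qed.

Lemma part_meas (I : finType) (E : I -> set T) (c : I -> R) (phi : T -> R) :
  (forall i, measurable (E i)) ->
  (forall i j, i != j -> E i `&` E j = set0) -> (forall t, exists i, E i t) ->
  (forall i t, E i t -> phi t = c i) ->
  measurable_fun setT phi.
Proof.
move=> mE disj cov cst; rewrite (part_fun disj cov cst).
apply: measurable_sum => i; apply: measurable_realfun.measurable_funM.
  exact: measurable_cst.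
exact: measurable_realfun.measurable_indic.
Qed.

Lemma part_int (I : finType) (E : I -> set T) (c : I -> R) (phi : T -> R) :
  (forall i, measurable (E i)) -> (forall i, 0 <= c i) ->
  (forall i j, i != j -> E i `&` E j = set0) -> (forall t, exists i, E i t) ->
  (forall i t, E i t -> phi t = c i) ->
  (\int[mu]_t (phi t)%:E = \sum_i (c i)%:E * mu (E i))%E.
Proof.
move=> mE c0 disj cov cst; rewrite (part_fun disj cov cst).
under eq_integral do rewrite -sumEFin.
rewrite ge0_integral_sum //; last first.
  by move=> i t _; rewrite lee_fin mulr_ge0 // indicE; case: (_ \in _).
  move=> i; apply/measurable_realfun.measurable_EFinP; apply: measurable_realfun.measurable_funM.
    exact: measurable_cst.
  exact: measurable_realfun.measurable_indic.
apply: eq_bigr => i _.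
under eq_integral do rewrite EFinM.
rewrite ge0_integralZl_EFin //.
  by rewrite integral_indic // setIT.
apply/measurable_realfun.measurable_EFinP; exact: measurable_realfun.measurable_indic.
Qed.

Definition SI := simple_integral add smul theta P mu.
Definition d0 : X * set T := (theta, set0).

Lemma SIE s : SI s = \big[add/theta]_(i < size s)
   smul (fine (mu (nth d0 s i).2)) (P (nth d0 s i).1).
Proof. by rewrite /SI /simple_integral foldrE big_map (big_nth d0) big_mkord. Qed.

Lemma rep_meas g s : simple_rep theta g s -> forall i, measurable (nth d0 s i).2.
Proof.
move=> [m _ _ _] i; have [si|si] := ltnP i (size s).
  exact: (m _ (nth_In d0 si)).
by rewrite nth_default //; exact: measurable0.
Qed.

Lemma rep_cover g s : simple_rep theta g s -> forall t, exists i : 'I_(size s), (nth d0 s i).2 t.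
Proof.
move=> [_ _ c _] t; have [p ps pt] := c t.
have [i si ip] := In_nth_ex d0 ps; exists (Ordinal si) => /=; by rewrite ip.
Qed.

Lemma rep_val g s : simple_rep theta g s -> forall i t, (i < size s)%N -> (nth d0 s i).2 t -> g t = (nth d0 s i).1.
Proof. by move=> [_ _ _ v] i t si; apply: v; apply: nth_In. Qed.

Lemma rep_disj g s : simple_rep theta g s -> forall i j : 'I_(size s), i != j ->
  (nth d0 s i).2 `&` (nth d0 s j).2 = set0.
Proof.
move=> [_ D _ _] i j ij; apply: D => //; by move/eqP: ij => ij [] /val_inj.
Qed.

Lemma split_measure g s (A : set T) : simple_rep theta g s -> measurable A ->
  fine (mu A) = \sum_(j < size s) fine (mu (A `&` (nth d0 s j).2)).
Proof.
move=> rs mA.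
have AE : A = \big[setU/set0]_(j < size s) (A `&` (nth d0 s j).2).
  rewrite -(bigcup_mkord _ (fun j => A `&` (nth d0 s j).2)); apply/seteqP; split => [t At|t [j _ [At _]] //].
  have [j jt] := rep_cover rs t; exists j => //=.
rewrite {1}AE measure_bigsetU_ord //.
- rewrite (eq_bigr (fun j : 'I_(size s) => (fine (mu (A `&` (nth d0 s j).2)))%:E)).
    by rewrite sumEFin.
  move=> j _; rewrite -mu_fin //; apply: measurableI => //; exact: rep_meas rs j.
- move=> j; apply: measurableI => //; exact: rep_meas rs j.
- apply/trivIsetP => i j _ _ ij.
  apply/seteqP; split => [t [[_ it] [_ jt]]|//].
  by rewrite -(rep_disj rs ij); split.
Qed.

Lemma compare g g' s s' : simple_rep theta g s -> simple_rep theta g' s' ->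
  ((h (SI s) (SI s'))%:E <= \int[mu]_t (h (g t) (g' t))%:E)%E.
Proof.
move=> rs rs'.
set n := size s; set m := size s'.
pose A i := (nth d0 s i).2; pose a i := (nth d0 s i).1.
pose B i := (nth d0 s' i).2; pose b i := (nth d0 s' i).1.
pose beta (i : 'I_n) (j : 'I_m) := fine (mu (A i `&` B j)).
have mA := rep_meas rs; have mB := rep_meas rs'.
have b0 i j : 0 <= beta i j by apply: fine_ge0; exact: measure_ge0.
have E1 : SI s = \big[add/theta]_(i < n) \big[add/theta]_(j < m) smul (beta i j) (P (a i)).
  rewrite SIE; apply: eq_bigr => i _; rewrite (split_measure rs' (mA i)).
  by apply: conv_split.
have E2 : SI s' = \big[add/theta]_(i < n) \big[add/theta]_(j < m) smul (beta i j) (P (b j)).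
  rewrite exchange_big SIE; apply: eq_bigr => j _; rewrite (split_measure rs (mB j)).
  rewrite conv_split //; try (by move=> i; apply: fine_ge0; exact: measure_ge0).
  by apply: eq_bigr => i _; rewrite /beta setIC.
rewrite E1 E2.
apply: (@le_trans _ _ (\sum_i \sum_j beta i j * h (a i) (b j))%:E).
  rewrite lee_fin; apply: le_trans; first exact: h_big.
  apply: ler_sum => i _; apply: le_trans; first exact: h_big.
  apply: ler_sum => j _; rewrite hsmul_pos //; exact: ler_wpM2l (PL _ _).
rewrite (@part_int _ (fun p : 'I_n * 'I_m => A p.1 `&` B p.2) (fun p => h (a p.1) (b p.2))).
- rewrite -sumEFin; under eq_bigr do rewrite -sumEFin.
  rewrite pair_bigA /=; apply: lee_sum => -[i j] _ /=.
  have mij : measurable (A i `&` B j) by exact: measurableI (mA i) (mB j).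
  by rewrite (mu_fin mij) -EFinM lee_fin mulrC.
- by move=> p; exact: measurableI (mA _) (mB _).
- by [].
- move=> [i j] [i' j'] /= ij; apply/seteqP; split => [t [[At Bt] [At' Bt']]|//].
  have [ii'|ii'] := eqVneq i i'.
    subst i'; have jj' : j != j' by apply: contraNneq ij => ->.
    by rewrite -(rep_disj rs' jj'); split.
  by rewrite -(rep_disj rs ii'); split.
- move=> t; have [i it] := rep_cover rs t; have [j jt] := rep_cover rs' t.
  by exists (i, j).
- move=> [i j] t /= [At Bt].
  by rewrite (rep_val rs (ltn_ord i) At) (rep_val rs' (ltn_ord j) Bt).
Qed.

Lemma compare_meas (g g' : T -> X) s s' : simple_rep theta g s -> simple_rep theta g' s' ->
  measurable_fun setT (fun t => h (g t) (g' t)).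
Proof.
move=> rs rs'.
set n := size s; set m := size s'.
pose A i := (nth d0 s i).2; pose a i := (nth d0 s i).1.
pose B i := (nth d0 s' i).2; pose b i := (nth d0 s' i).1.
apply: (@part_meas _ (fun p : 'I_n * 'I_m => A p.1 `&` B p.2) (fun p => h (a p.1) (b p.2))).
- by move=> p; exact: measurableI (rep_meas rs _) (rep_meas rs' _).
- move=> [i j] [i' j'] /= ij; apply/seteqP; split => [t [[At Bt] [At' Bt']]|//].
  have [ii'|ii'] := eqVneq i i'.
    subst i'; have jj' : j != j' by apply: contraNneq ij => ->.
    by rewrite -(rep_disj rs' jj'); split.
  by rewrite -(rep_disj rs ii'); split.
- move=> t; have [i it] := rep_cover rs t; have [j jt] := rep_cover rs' t.
  by exists (i, j).
- move=> [i j] t /= [At Bt].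
  by rewrite (rep_val rs (ltn_ord i) At) (rep_val rs' (ltn_ord j) Bt).
Qed.

Hypothesis hcomplete : complete_metric h.

Lemma int_cst (k : R) : mu.-integrable setT (fun _ : T => k%:E).
Proof.
apply/integrableP; split; first exact: measurable_cst.
rewrite (eq_integral (cst `|k|%:E)); last by [].
by rewrite integral_cst // (mu_fin measurableT) -EFinM ltry.
Qed.

Lemma int_fin (phi : T -> R) (k : R) : measurable_fun setT phi ->
  (forall t, 0 <= phi t <= k) ->
  (\int[mu]_t (phi t)%:E = (fine (\int[mu]_t (phi t)%:E))%:E)%E /\
  fine (\int[mu]_t (phi t)%:E)%E <= k * fine (mu setT).
Proof.
move=> mphi pk.
have k0 : 0 <= k by case/andP: (pk point) => a b; exact: le_trans a b.
have le : (\int[mu]_t (phi t)%:E <= (k * fine (mu setT))%:E)%E.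
  rewrite EFinM -(mu_fin measurableT) -integral_cst //.
  apply: ge0_le_integral => //.
  - by move=> t _; rewrite lee_fin; case/andP: (pk t).
  - exact/measurable_realfun.measurable_EFinP.
  - by move=> t _; rewrite lee_fin; case/andP: (pk t).
have ge : (0 <= \int[mu]_t ((phi t)%:E))%E.
  by apply: integral_ge0 => t _; rewrite lee_fin; case/andP: (pk t).
have fin : (\int[mu]_t ((phi t)%:E))%E \is a fin_num.
  by rewrite ge0_fin_numE //; apply: le_lt_trans le _; exact: ltry.
split; first by rewrite fineK.
by rewrite -lee_fin fineK.
Qed.

Lemma nearN (Pn : nat -> Prop) : (\forall n \near \oo, Pn n) -> exists N, forall n, (N <= n)%N -> Pn n.
Proof. by move=> [N _ HN]; exists N. Qed.

Lemma integral_exists (F : T -> X) (g : nat -> T -> X) (s : nat -> seq (X * set T)) (M : R) (e : nat -> R) :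
  (forall n, simple_rep theta (g n) (s n)) -> (forall n t, h (g n t) theta <= M) ->
  (forall n t, h (g n t) (F t) <= e n) -> e @ \oo --> 0 ->
  exists I, is_integral_T add smul theta h P mu F I /\ converges_to h (fun n => SI (s n)) I.
Proof.
move=> rs gM gF e0.
set mT := fine (mu setT).
have mT0 : 0 <= mT by apply: fine_ge0; exact: measure_ge0.
have bnd p q : h (SI (s p)) (SI (s q)) <= (e p + e q) * mT.
  have pb t : 0 <= h (g p t) (g q t) <= e p + e q.
    rewrite hge0 /=; apply: le_trans (htri _ (F t) _) _.
    by apply: lerD => //; rewrite hC.
  have := compare (rs p) (rs q).
  have [-> le] := @int_fin (fun t => h (g p t) (g q t)) (e p + e q) (compare_meas (rs p) (rs q)) pb.
  by rewrite lee_fin => H; apply: le_trans H le.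
have [I HI] : exists I, converges_to h (fun n => SI (s n)) I.
  apply: hcomplete => eps eps0.
  have K0 : 0 < mT + 1 by apply: ltr_pwDr.
  have := cvgr0_norm_lt _ e0 _ (divr_gt0 eps0 (addr_gt0 K0 K0)).
  move=> HH; have [N HN] := nearN (HH _); exists N => p q Np Nq.
  apply: le_lt_trans (bnd p q) _.
  have ep := HN p Np; have eq := HN q Nq.
  have e0' n : 0 <= e n by apply: le_trans (gF n point).
  set K := mT + 1 in K0 ep eq *.
  have H1 : (e p + e q) * mT <= (`|e p| + `|e q|) * K.
    apply: ler_pM => //; first by apply: addr_ge0.
      by apply: lerD; exact: ler_norm.
    by rewrite /K lerDl.
  apply: le_lt_trans H1 _.
  rewrite -ltr_pdivlMr //.
  have -> : eps / K = eps / (K + K) + eps / (K + K).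
    by field; apply/andP; split; apply: lt0r_neq0 => //; apply: addr_gt0.
  exact: ltrD.
exists I; split => //.
move=> g' s' rs' [M' gM'] ae'.
pose phi n t := h (g' n t) (g n t).
have mphi n : measurable_fun setT (phi n) := compare_meas (rs' n) (rs n).
have mphiE n : measurable_fun setT (fun t => (phi n t)%:E).
  exact/measurable_realfun.measurable_EFinP.
have phib n t : 0 <= phi n t <= M' + M.
  rewrite hge0 /=; apply: le_trans (htri _ theta _) _; apply: lerD => //; by rewrite hC.
have mcst : measurable_fun setT (cst (0%E : \bar R) : T -> \bar R) by exact: measurable_cst.
have aeconv : \forall t \ae mu, setT t -> (phi n t)%:E @[n --> \oo] --> (cst (0%E : \bar R) t).
  apply: filterS ae' => t Ht _.
  apply/fine_cvgP; split; first by apply: nearW.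
  rewrite /comp /=.
  apply: (squeeze_cvgr (f := @cst nat R 0) (h := (fun n => h (g' n t) (F t) + e n))).
  + apply: nearW => n; rewrite hge0 /=; apply: le_trans (htri _ (F t) _) _.
    by apply: lerD => //; rewrite hC.
  + apply/cvgrPdist_lt => eps eps0; apply: nearW => n; by rewrite /cst subrr normr0.
  + have := cvgD Ht e0; rewrite addr0 => HH; exact: HH.
have aedom : \forall t \ae mu, forall n, setT t -> (`|(phi n t)%:E| <= (M' + M)%:E)%E.
  apply: aeW => t n _ /=.
  by rewrite lee_fin ger0_norm; case/andP: (phib n t).
have [_ _ DC] := @dominated_convergence d T R mu setT measurableT (fun n t => (phi n t)%:E) (cst 0%E)
  (fun _ => (M' + M)%:E) mphiE mcst aeconv (int_cst _) aedom.
rewrite integral0 in DC.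
have DCf : (fun n => fine (\int[mu]_t (phi n t)%:E)%E) @ \oo --> 0.
  by apply: (@fine_cvg _ _ _ _ _ 0); exact: DC.
rewrite /converges_to.
apply: (squeeze_cvgr (f := @cst nat R 0) (h := (fun n => fine (\int[mu]_t (phi n t)%:E) + h (SI (s n)) I))).
+ apply: nearW => n; rewrite hge0 /=.
  apply: le_trans (htri _ (SI (s n)) _) _; apply: lerD => //.
  have := compare (rs' n) (rs n).
  by have [-> _] := int_fin (mphi n) (phib n); rewrite lee_fin.
+ apply/cvgrPdist_lt => eps eps0; apply: nearW => n; by rewrite /cst subrr normr0.
+ have := cvgD DCf HI; rewrite addr0 => HH; exact: HH.
Qed.

Variables (r : T -> T -> R) (omega : R -> R) (Q : set T).
Hypothesis r0 : forall x y, 0 <= r x y.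
Hypothesis rzero : forall x y, r x y = 0 -> x = y.
Hypothesis rxx : forall x, r x x = 0.
Hypothesis rC : forall x y, r x y = r y x.
Hypothesis rtri : forall x y z, r x z <= r x y + r y z.
Hypothesis compT : compact_r r setT.
Hypothesis measE : @measurable d T = <<s [set A | open_r r A] >>.
Hypothesis om_mono : forall a b, 0 <= a -> a <= b -> omega a <= omega b.
Hypothesis om_cont : forall a (e : R), 0 <= a -> 0 < e -> exists2 del : R, 0 < del &
           forall b, 0 <= b -> `|b - a| < del -> `|omega b - omega a| < e.
Hypothesis om_ge0 : forall a, 0 <= a -> 0 <= omega a.
Hypothesis om0 : omega 0 = 0.
Hypothesis om_sub : forall a b, 0 <= a -> 0 <= b -> omega (a + b) <= omega a + omega b.
Hypothesis compQ : compact_r r Q.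

Lemma open_meas A : open_r r A -> measurable A.
Proof. by move=> oA; rewrite measE; apply: sub_sigma_algebra. Qed.

Lemma ball_open c del : open_r r [set t | r c t < del].
Proof.
move=> t /= ct; exists (del - r c t); first by rewrite subr_gt0.
move=> s ts /=; have := rtri c t s; lra.
Qed.

Lemma mem_le_sumn (s : seq nat) i : i \in s -> (i <= \sum_(j <- s) j)%N.
Proof.
elim: s => //= a s IH; rewrite in_cons big_cons => /orP [/eqP ->|/IH H].
  exact: leq_addr.
exact: leq_trans H (leq_addl _ _).
Qed.

Lemma Qclosed : open_r r (~` Q).
Proof.
move=> t nQt.
pose U (n : nat) := [set u | n.+1%:R^-1 < r u t].
have oU n : open_r r (U n).
  move=> u; rewrite /U /= => Hu; exists (r u t - n.+1%:R^-1); first by rewrite subr_gt0.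
  move=> v uv; rewrite /=; have := rtri u v t; set k := n.+1%:R^-1 in Hu uv *; lra.
have cov : Q `<=` \bigcup_n U n.
  move=> q Qq; have qt : 0 < r q t.
    rewrite lt_neqAle r0 andbT; apply/eqP => /esym /rzero qt.
    by apply: nQt; rewrite -qt.
  have [k Hk] := ltr_add_invr qt; exists k => //=; by rewrite add0r in Hk.
have [F finF QF] := compQ oU cov.
have [sF sFE] := (finite_seqP F).1 finF.
pose N := \sum_(i <- sF) i.
exists (N.+1%:R^-1); first by rewrite invr_gt0 ltr0n.
move=> s ts Qs; have [i Fi Ui] := QF s Qs.
have iN : (i <= N)%N by apply: mem_le_sumn; rewrite sFE in Fi.
have : N.+1%:R^-1 <= i.+1%:R^-1 :> R.
  by rewrite lef_pV2 ?posrE ?ltr0n // ler_nat ltnS.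
move: Ui ts; rewrite /U /= rC; set k1 := N.+1%:R^-1; set k2 := i.+1%:R^-1; lra.
Qed.

Lemma mQ : measurable Q.
Proof. by rewrite -(setCK Q); apply: measurableC; apply: open_meas; exact: Qclosed. Qed.

Lemma finite_cover del : 0 < del -> exists cs : seq T, forall t, has (fun c => r c t < del) cs.
Proof.
move=> del0.
have cov : [set: T] `<=` \bigcup_c [set t | r c t < del].
  by move=> t _; exists t => //=; rewrite rxx.
have [F finF TF] := compT (fun c => @ball_open c del) cov.
have [cs csE] := (finite_seqP F).1 finF.
exists cs => t; have [c Fc ct] := TF t I.
by apply/hasP; exists c => //; rewrite csE in Fc.
Qed.

Lemma sum_mem_le (F : T -> R) cs c : (forall x, 0 <= F x) -> c \in cs -> F c <= \sum_(x <- cs) F x.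
Proof.
move=> F0; elim: cs => //= a cs IH; rewrite in_cons big_cons => /orP [/eqP ->|/IH H].
  by rewrite lerDl sumr_ge0.
by apply: le_trans H _; rewrite lerDr.
Qed.

Lemma r_bounded : exists D, 0 <= D /\ forall a b, r a b <= D.
Proof.
have [cs H] := finite_cover ltr01.
pose S := \sum_(c <- cs) r c point.
have S0 : 0 <= S by apply: sumr_ge0.
exists (1 + S + (S + 1)); split; first lra.
move=> a b.
have /hasP [ca ca_in ca_a] := H a; have /hasP [cb cb_in cb_b] := H b.
have h1 := sum_mem_le (F := fun c => r c point) (fun x => r0 x point) ca_in.
have h2 := sum_mem_le (F := fun c => r c point) (fun x => r0 x point) cb_in.
have := rtri a ca b; have := rtri ca point b; have := rtri point cb b.
rewrite (rC a ca) (rC point cb) /= in h1 h2 *.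
move: ca_a cb_b h1 h2; rewrite /S /=; lra.
Qed.

Lemma om_le a b c : 0 <= a -> 0 <= b -> 0 <= c -> a <= b + c -> omega a <= omega b + omega c.
Proof. move=> a0 b0 c0 abc; apply: le_trans (om_sub b0 c0); exact: om_mono. Qed.

Definition del_n (n : nat) : R := n.+1%:R^-1.
Lemma del_pos n : 0 < del_n n. Proof. by rewrite /del_n invr_gt0 ltr0n. Qed.

Lemma e_cvg : (fun n => omega (del_n n)) @ \oo --> 0.
Proof.
apply/cvgrPdist_lt => eps eps0.
have [del del0 Hd] := om_cont (lexx 0) eps0.
apply: filterS (near_infty_natSinv_lt (PosNum del0)) => n /= Hn.
have := Hd (del_n n) (ltW (del_pos n)); rewrite subr0 ger0_norm ?(ltW (del_pos n)) // om0 subr0.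
by move=> /(_ Hn); rewrite sub0r normrN.
Qed.

Definition kk (cs : seq T) (del : R) (t : T) := find (fun c => r c t < del) cs.
Definition gb (cs : seq T) (del : R) (f : T -> X) (t : T) :=
  smul (\1_Q t) (f (nth point cs (kk cs del t))).
Definition sb (cs : seq T) (del : R) (f : T -> X) : seq (X * set T) :=
  (theta, ~` Q) :: mkseq (fun i => (f (nth point cs i), Q `&` [set t | kk cs del t = i])) (size cs).

Lemma find_meas cs del i : measurable [set t | kk cs del t = i].
Proof.
elim: cs i => [|c cs IH] i.
  case: i => [|i].
    rewrite (_ : [set t | _] = setT) //; by apply/seteqP; split.
  rewrite (_ : [set t | _] = set0) //; by apply/seteqP; split.
have -> : [set t | kk (c :: cs) del t = i] = if i is j.+1 then
    (~` [set t | r c t < del]) `&` [set t | kk cs del t = j] else [set t | r c t < del].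
  rewrite /kk /=; case: i => [|j]; apply/seteqP; split => t /=; case: ifP => //.
  - by move=> _ [->].
  - by move=> _ [H]; exfalso; exact: H.
  - by move=> _ [_ ->].
case: i => [|j]; first exact: open_meas (@ball_open c del).
apply: measurableI; last exact: IH.
by apply: measurableC; exact: open_meas (@ball_open c del).
Qed.

Lemma rep_build cs del f : (forall t, has (fun c => r c t < del) cs) ->
  simple_rep theta (gb cs del f) (sb cs del f).
Proof.
move=> Hcs; split.
- move=> p /= [<-|]; first exact: open_meas Qclosed.
  move=> /(In_nth_ex d0) [i]; rewrite size_mkseq => ilt; rewrite nth_mkseq // => <- /=.
  apply: measurableI; [exact: mQ|exact: find_meas].
- move=> [|i] [|j] /=; rewrite size_mkseq => ilt jlt ij //.
  + rewrite nth_mkseq //; apply/seteqP; split => t // [nQ [Qt _]]; exact: nQ.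
  + rewrite nth_mkseq //; apply/seteqP; split => t // [[Qt _] nQ]; exact: nQ.
  + rewrite !nth_mkseq //; apply/seteqP; split => t // [[_ ki] [_ kj]].
    by apply: ij; rewrite /= in ki kj; rewrite -ki -kj.
- move=> t; case: (pselect (Q t)) => Qt.
  + have kt : (kk cs del t < size cs)%N by rewrite /kk -has_find.
    exists (f (nth point cs (kk cs del t)), Q `&` [set t' | kk cs del t' = kk cs del t]) => //.
    right; rewrite -(nth_mkseq d0 (fun i => (f (nth point cs i), Q `&` [set t | kk cs del t = i])) kt).
    by apply: nth_In; rewrite size_mkseq.
  + by exists (theta, ~` Q) => //; left.
- move=> t p /= [<- /= nQt|].
    by rewrite /gb indicE memNset // smul0.
  move=> /(In_nth_ex d0) [i]; rewrite size_mkseq => ilt; rewrite nth_mkseq // => <- /= [Qt kt].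
  by rewrite /gb indicE mem_set // smul1 kt.
Qed.

Definition csn (n : nat) : seq T := projT1 (cid (finite_cover (del_pos n))).
Lemma csnP n : forall t, has (fun c => r c t < del_n n) (csn n).
Proof. exact: (projT2 (cid (finite_cover (del_pos n)))). Qed.

Definition gs f n := gb (csn n) (del_n n) f.
Definition ss f n := sb (csn n) (del_n n) f.

Lemma gs_near n t : Q t -> r (nth point (csn n) (kk (csn n) (del_n n) t)) t < del_n n.
Proof. by move=> _; exact: (nth_find point (csnP n t)). Qed.

Lemma gs_Q f n t : Q t -> gs f n t = f (nth point (csn n) (kk (csn n) (del_n n) t)).
Proof. by move=> Qt; rewrite /gs /gb indicE mem_set // smul1. Qed.

Lemma gs_nQ f n t : ~ Q t -> gs f n t = theta.
Proof. by move=> Qt; rewrite /gs /gb indicE memNset // smul0. Qed.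

Definition Xint f := Xintegral add smul theta h P mu Q f.

Lemma Xint_conv f : H_omega r h omega f -> converges_to h (fun n => SI (ss f n)) (Xint f).
Proof.
move=> Hf.
set F := fun t => smul (\1_Q t) (f t).
have [D [D0 HD]] := r_bounded.
have gF n t : h (gs f n t) (F t) <= omega (del_n n).
  rewrite /F; case: (pselect (Q t)) => Qt.
  - rewrite gs_Q // indicE mem_set // smul1; apply: le_trans (Hf _ _) _.
    by apply: om_mono => //; apply: ltW; exact: gs_near.
  - by rewrite gs_nQ // indicE memNset // smul0 hxx; apply: om_ge0; exact: ltW (del_pos n).
have gM n t : h (gs f n t) theta <= omega D + h (f point) theta.
  case: (pselect (Q t)) => Qt.
  - rewrite gs_Q //; apply: le_trans (htri _ (f point) _) _; apply: lerD => //.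
    by apply: le_trans (Hf _ _) _; apply: om_mono.
  - by rewrite gs_nQ // hxx; apply: addr_ge0 => //; exact: om_ge0.
have reps n : simple_rep theta (gs f n) (ss f n) by apply: rep_build; exact: csnP.
have [I [HI _]] := integral_exists reps gM gF e_cvg.
rewrite /Xint /Xintegral /integral_T; case: pselect => [ex|nex]; last by exfalso; apply: nex; exists I.
apply: (projT2 (cid ex)) => //.
  by exists (omega D + h (f point) theta).
apply: aeW => t.
rewrite /converges_to.
apply: (squeeze_cvgr (f := @cst nat R 0) (h := fun n => omega (del_n n))).
+ by apply: nearW => n; rewrite hge0 /=; exact: gF.
+ apply/cvgrPdist_lt => eps eps0; apply: nearW => n; by rewrite /cst subrr normr0.
+ exact: e_cvg.
Qed.

Lemma le_of_cvg (a b : R) (v : nat -> R) : v @ \oo --> 0 -> (forall n, a <= b + v n) -> a <= b.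
Proof.
move=> v0 H; apply/ler_addgt0Pr => eps eps0.
have HH := cvgr0_norm_lt _ v0 _ eps0; have [N HN] := nearN (HH _).
apply: le_trans (H N) _; rewrite lerD2l.
exact: le_trans (ler_norm _) (ltW (HN N (leqnn N))).
Qed.

Lemma SIE' s : SI s = \big[add/theta]_(p <- s) smul (fine (mu p.2)) (P p.1).
Proof. by rewrite /SI /simple_integral foldrE big_map. Qed.

Lemma hline (a b : R) u : convex_elt add smul u -> h u theta = 1 -> 0 <= b -> b <= a ->
  h (smul a u) (smul b u) <= a - b.
Proof.
move=> cu hu b0 ba.
rewrite -{1}(subrK b a) cu ?subr_ge0 //.
rewrite -{2}[smul b u]add0l; apply: le_trans (hT _ _ _) _.
by rewrite -(smulx0 (a - b)) hsmul_pos ?subr_ge0 // hu mulr1.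
Qed.

Lemma hline_eq (a : R) u : h u theta = 1 -> 0 <= a -> h (smul a u) theta = a.
Proof. by move=> hu a0; rewrite -(smulx0 a) hsmul_pos // hu mulr1. Qed.

Variable t0 : T.
Hypothesis muQ0 : (0 < mu Q)%E.

Definition mQr := fine (mu Q).
Lemma mQr_gt0 : 0 < mQr.
Proof. by have := muQ0; rewrite (mu_fin mQ) lte_fin. Qed.
Definition cc := mQr^-1.
Lemma cc_ge0 : 0 <= cc. Proof. by rewrite /cc invr_ge0 ltW // mQr_gt0. Qed.

Lemma om_r_meas : measurable_fun setT (fun t => omega (r t0 t)).
Proof.
have mR : @measurable _ R = <<s @RGenOpens.G R >> by exact: RGenOpens.measurableE.
apply: (measurability (@RGenOpens.G R) mR) => _ [B [x [y ->]] <-].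
rewrite setTI; apply: open_meas => t /=; rewrite in_itv /= => /andP [xt ty].
set a := r t0 t.
have e0 : 0 < Num.min (omega a - x) (y - omega a) by rewrite lt_min !subr_gt0 xt ty.
have [del del0 Hd] := om_cont (r0 t0 t) e0.
exists del => // s ts; rewrite in_itv /=.
have : `|r t0 s - a| < del.
  rewrite ltr_norml; have := rtri t0 t s; have := rtri t0 s t; rewrite (rC s t).
  move: ts; rewrite /a => ts h1 h2; apply/andP; split; lra.
move/(Hd _ (r0 t0 s)); rewrite lt_min => /andP [h1 h2].
move: h1 h2; rewrite !ltr_norml => /andP [h1 h1'] /andP [h2 h2']; apply/andP; split; lra.
Qed.

Definition psi t := \1_Q t * omega (r t0 t).

Lemma psi_meas : measurable_fun setT psi.
Proof. apply: measurable_realfun.measurable_funM; [exact: measurable_realfun.measurable_indic mQ|exact: om_r_meas]. Qed.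

Lemma psi_ge0 t : 0 <= psi t.
Proof. by rewrite /psi indicE; case: (t \in Q); rewrite ?mul1r ?mul0r //; apply: om_ge0. Qed.

Definition Jr := fine (\int[mu]_t (psi t)%:E)%E.

Lemma JrE : (\int[mu]_(s in Q) (omega (r t0 s))%:E = Jr%:E)%E /\ (\int[mu]_t (psi t)%:E = Jr%:E)%E.
Proof.
have [D [D0 HD]] := r_bounded.
have pb t : 0 <= psi t <= omega D.
  rewrite psi_ge0 /= /psi indicE; case: (t \in Q); rewrite ?mul1r ?mul0r; last exact: om_ge0.
  exact: om_mono.
have [E1 _] := int_fin psi_meas pb.
split => //.
rewrite /Jr -E1 integral_mkcond; apply: eq_integral => t _; rewrite patchE /psi indicE.
by case: (t \in Q); rewrite ?mul1r ?mul0r.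
Qed.

Lemma repG (x : X) : simple_rep theta (fun t => smul (\1_Q t) x) [:: (theta, ~` Q); (x, Q)].
Proof.
split.
- move=> p /= [<-|[<-|[]]]; [exact: open_meas Qclosed | exact: mQ].
- move=> [|[|i]] [|[|j]] //= _ _ ij; try (by exfalso; apply: ij).
  + by apply/seteqP; split => t // [a b].
  + by apply/seteqP; split => t // [a b].
- move=> t; case: (pselect (Q t)) => Qt.
  + by exists (x, Q) => //=; right; left.
  + by exists (theta, ~` Q) => //=; left.
- move=> t p /= [<- /= nQt|[<- /= Qt|[]]]; rewrite indicE.
  + by rewrite memNset // smul0.
  + by rewrite mem_set // smul1.
Qed.

Lemma SIG x : SI [:: (theta, ~` Q); (x, Q)] = smul mQr (P x).
Proof. by rewrite /SI /simple_integral /= P_theta smulx0 add0l add0. Qed.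

Lemma int_indQ (k : R) : 0 <= k -> (\int[mu]_t (k * \1_Q t)%:E = (k * mQr)%:E)%E.
Proof.
move=> k0; under eq_integral do rewrite EFinM.
rewrite ge0_integralZl_EFin //.
- rewrite integral_indic //; last exact: mQ.
  by rewrite setIT (mu_fin mQ) -EFinM.
- apply/measurable_EFinP; exact: measurable_realfun.measurable_indic mQ.
Qed.

Lemma meas_ind_k (k : R) : measurable_fun setT (fun t => k * \1_Q t).
Proof.
apply: measurable_realfun.measurable_funM; [exact: measurable_cst|exact: measurable_realfun.measurable_indic mQ].
Qed.

Lemma int_split (k K : R) (phi : T -> R) : 0 <= k -> measurable_fun setT phi -> (forall t, 0 <= phi t <= K) ->
  (\int[mu]_t (phi t + k * \1_Q t)%:E = (fine (\int[mu]_t (phi t)%:E) + k * mQr)%:E)%E.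
Proof.
move=> k0 mphi pb.
have [E _] := int_fin mphi pb.
under eq_integral do rewrite EFinD.
rewrite ge0_integralD //.
- by rewrite int_indQ // EFinD -E.
- by move=> t _; rewrite lee_fin; case/andP: (pb t).
- exact/measurable_EFinP.
- by move=> t _; rewrite lee_fin mulr_ge0 // indicE; case: (_ \in _).
- apply/measurable_EFinP; exact: meas_ind_k.
Qed.

Lemma hbound (f : T -> X) n : H_omega r h omega f ->
  forall t, 0 <= h (smul (\1_Q t) (f t0)) (gs f n t) <= psi t + omega (del_n n) * \1_Q t.
Proof.
move=> Hf t; rewrite hge0 /= /psi; case: (pselect (Q t)) => Qt.
- rewrite gs_Q // indicE mem_set // smul1 mul1r mulr1.
  apply: le_trans (Hf _ _) _.
  set c := nth point (csn n) (kk (csn n) (del_n n) t).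
  apply: le_trans (om_le (r0 _ _) (r0 t0 t) (r0 t c) (rtri t0 t c)) _.
  rewrite lerD2l; apply: om_mono => //; rewrite rC; apply: ltW; exact: gs_near.
- by rewrite gs_nQ // indicE memNset // smul0 mul0r mulr0 addr0 hxx.
Qed.

Lemma part1_n f n : H_omega r h omega f ->
  h (SI [:: (theta, ~` Q); (f t0, Q)]) (SI (ss f n)) <= Jr + omega (del_n n) * mQr.
Proof.
move=> Hf.
have rb := @rep_build (csn n) (del_n n) f (csnP n).
have H := compare (repG (f t0)) rb.
have [D [D0 HD]] := r_bounded.
have pb t : 0 <= psi t <= omega D.
  rewrite psi_ge0 /= /psi indicE; case: (t \in Q); rewrite ?mul1r ?mul0r; last exact: om_ge0.
  exact: om_mono.
have om0' : 0 <= omega (del_n n) by apply: om_ge0; exact: ltW (del_pos n).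
have le : (\int[mu]_t (h (smul (\1_Q t) (f t0)) (gb (csn n) (del_n n) f t))%:E <=
           \int[mu]_t (psi t + omega (del_n n) * \1_Q t)%:E)%E.
  apply: ge0_le_integral => //.
  - by move=> t _; rewrite lee_fin; exact: hge0.
  - apply/measurable_EFinP; exact: compare_meas (repG _) rb.
  - apply/measurable_EFinP; apply: measurable_realfun.measurable_funD; [exact: psi_meas|exact: meas_ind_k].
  - by move=> t _; rewrite lee_fin; case/andP: (hbound n Hf t).
rewrite (int_split om0' psi_meas pb) in le.
by rewrite -lee_fin; apply: le_trans H le.
Qed.

Lemma v_cvg f : H_omega r h omega f ->
  (fun n => cc * (omega (del_n n) * mQr + h (SI (ss f n)) (Xint f))) @ \oo --> 0.
Proof.
move=> Hf; have HI := Xint_conv Hf.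
rewrite (_ : 0 = cc * (0 * mQr + 0)); last by rewrite mul0r add0r mulr0.
apply: cvgMl_tmp; apply: cvgD => //; apply: cvgMr_tmp; exact: e_cvg.
Qed.

Lemma part1 f : H_omega r h omega f -> h (P (f t0)) (smul cc (Xint f)) <= cc * Jr.
Proof.
move=> Hf.
have Pf : P (f t0) = smul cc (SI [:: (theta, ~` Q); (f t0, Q)]).
  by rewrite SIG smulM mulVf ?smul1 // lt0r_neq0 // mQr_gt0.
apply: (le_of_cvg (v_cvg Hf)) => n; rewrite Pf.
apply: le_trans (htri _ (smul cc (SI (ss f n))) _) _.
rewrite !hsmul_pos ?cc_ge0 //.
have := part1_n n Hf; have := cc_ge0.
set a := h _ _; set b := h _ _; set w := omega _.
move=> c0 hab; rewrite -!mulrDr; apply: ler_wpM2l => //; lra.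
Qed.

Section Part2.
Variable u : X.
Hypothesis cu : convex_elt add smul u.
Hypothesis Pu : P u = u.
Hypothesis hu : h u theta = 1.

Definition f0 t := smul (omega (r t0 t)) u.

Lemma f0_H : H_omega r h omega f0.
Proof.
move=> s t; rewrite /f0.
have [le|le] := leP (omega (r t0 t)) (omega (r t0 s)).
- apply: le_trans (hline cu hu (om_ge0 (r0 _ _)) le) _.
  have := om_le (r0 t0 s) (r0 t0 t) (r0 t s) (rtri t0 t s); rewrite (rC t s); lra.
- rewrite hC; apply: le_trans (hline cu hu (om_ge0 (r0 _ _)) (ltW le)) _.
  have := om_le (r0 t0 t) (r0 t0 s) (r0 s t) (rtri t0 s t); lra.
Qed.

Lemma SI_line s : (forall p, List.In p s -> exists w, 0 <= w /\ p.1 = smul w u) ->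
  SI s = smul (\sum_(p <- s) fine (mu p.2) * h p.1 theta) u.
Proof.
elim: s => [|p s IH] Hs; first by rewrite SIE' !big_nil smul0.
rewrite SIE' !big_cons -SIE' IH; last by move=> q qs; apply: Hs; right.
have [w [w0 ->]] := Hs p (or_introl erefl).
rewrite P_smul Pu smulM hline_eq // cu //.
- by apply: mulr_ge0 => //; apply: fine_ge0; exact: measure_ge0.
- apply: sumr_ge0 => q _; apply: mulr_ge0 => //; apply: fine_ge0; exact: measure_ge0.
Qed.

Lemma ss_line n : forall p, List.In p (ss f0 n) -> exists w, 0 <= w /\ p.1 = smul w u.
Proof.
move=> p /= [<-|]; first by exists 0; rewrite smul0.
move=> /(In_nth_ex d0) [i]; rewrite size_mkseq => ilt; rewrite nth_mkseq // => <- /=.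
by exists (omega (r t0 (nth point (csn n) i))); split => //; apply: om_ge0.
Qed.

Lemma sigma_int n : (\int[mu]_t (h (gs f0 n t) theta)%:E =
   (\sum_(p <- ss f0 n) fine (mu p.2) * h p.1 theta)%:E)%E.
Proof.
have rb := @rep_build (csn n) (del_n n) f0 (csnP n).
set s := ss f0 n.
rewrite (@part_int _ (fun i : 'I_(size s) => (nth d0 s i).2) (fun i => h (nth d0 s i).1 theta)).
- rewrite (big_nth d0) big_mkord -sumEFin; apply: eq_bigr => i _.
  by rewrite (mu_fin (rep_meas rb i)) -EFinM mulrC.
- exact: rep_meas rb.
- by [].
- exact: rep_disj rb.
- exact: rep_cover rb.
- by move=> i t it; rewrite /gs (rep_val rb (ltn_ord i) it).
Qed.

Lemma part2_n n : Jr <= \sum_(p <- ss f0 n) fine (mu p.2) * h p.1 theta + omega (del_n n) * mQr.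
Proof.
have rb := @rep_build (csn n) (del_n n) f0 (csnP n).
have om0' : 0 <= omega (del_n n) by apply: om_ge0; exact: ltW (del_pos n).
have [D [D0 HD]] := r_bounded.
have pb t : 0 <= h (gs f0 n t) theta <= omega D.
  rewrite hge0 /=; case: (pselect (Q t)) => Qt.
  - by rewrite gs_Q // /f0 hline_eq //; [apply: om_mono|apply: om_ge0].
  - by rewrite gs_nQ // hxx; apply: om_ge0.
have mg : measurable_fun setT (fun t => h (gs f0 n t) theta).
  have := compare_meas rb (repG theta).
  rewrite (_ : (fun t => h (gb (csn n) (del_n n) f0 t) (smul (\1_Q t) theta)) = (fun t => h (gs f0 n t) theta)) //.
  by apply/funext => t; rewrite smulx0.
have le : (\int[mu]_t (psi t)%:E <= \int[mu]_t (h (gs f0 n t) theta + omega (del_n n) * \1_Q t)%:E)%E.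
  apply: ge0_le_integral => //.
  - by move=> t _; rewrite lee_fin; exact: psi_ge0.
  - exact/measurable_EFinP/psi_meas.
  - apply/measurable_EFinP; apply: measurable_realfun.measurable_funD; [exact: mg|exact: meas_ind_k].
  - move=> t _; rewrite lee_fin /psi; case: (pselect (Q t)) => Qt.
    + rewrite indicE mem_set // mul1r mulr1 gs_Q // /f0 hline_eq //; last exact: om_ge0.
      set c := nth point (csn n) (kk (csn n) (del_n n) t).
      apply: le_trans (om_le (r0 _ _) (r0 t0 c) (r0 c t) (rtri t0 c t)) _.
      rewrite lerD2l; apply: om_mono => //; apply: ltW; exact: gs_near.
    + by rewrite indicE memNset // mul0r mulr0 addr0; exact: hge0.
rewrite (proj2 JrE) (int_split om0' mg pb) sigma_int /= in le.
by rewrite lee_fin in le.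
Qed.

Lemma part2 : h (P (f0 t0)) (smul cc (Xint f0)) = cc * Jr.
Proof.
apply/eqP; rewrite eq_le; apply/andP; split; first exact: part1 f0_H.
have -> : P (f0 t0) = theta by rewrite /f0 rxx om0 smul0 P_theta.
apply: (le_of_cvg (v_cvg f0_H)) => n.
have SE := SI_line (@ss_line n).
set S := SI (ss f0 n) in SE *; set I := Xint f0.
set sig := \sum_(p <- _) _ in SE *.
have sig0 : 0 <= sig.
  by apply: sumr_ge0 => q _; apply: mulr_ge0 => //; apply: fine_ge0; exact: measure_ge0.
have H1 : h theta (smul cc S) <= h theta (smul cc I) + cc * h S I.
  apply: le_trans (htri _ (smul cc I) _) _; rewrite lerD2l hsmul_pos ?cc_ge0 //.
  by rewrite (hC I S).
have H0 : h theta (smul cc S) = cc * sig.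
  by rewrite SE smulM hC hline_eq //; apply: mulr_ge0 => //; exact: cc_ge0.
have := part2_n n; have := cc_ge0.
rewrite -/sig; set w := omega _; set a := h theta (smul cc I).
move=> c0 H2.
have : cc * Jr <= cc * (sig + w * mQr) by apply: ler_wpM2l.
rewrite H0 in H1; move: H1; set b := h S I; move=> H1 H3; move: H1 H3; rewrite !mulrDr /a; lra.
Qed.
End Part2.

Lemma final1 f : H_omega r h omega f ->
  ((h (P (f t0)) (smul (fine (mu Q))^-1 (Xintegral add smul theta h P mu Q f)))%:E
      <= ((fine (mu Q))^-1)%:E * \int[mu]_(s in Q) (omega (r t0 s))%:E)%E.
Proof. by move=> Hf; rewrite (proj1 JrE) -EFinM lee_fin; exact: part1 Hf. Qed.

Lemma final2 : (exists x, convex_elt add smul x /\ x <> theta) ->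
     ereal_sup [set (h (P (f t0)) (smul (fine (mu Q))^-1
                      (Xintegral add smul theta h P mu Q f)))%:E
               | f in H_omega r h omega]
     = (((fine (mu Q))^-1)%:E * \int[mu]_(s in Q) (omega (r t0 s))%:E)%E.
Proof.
move=> [x [cx xne]].
have hx : 0 < h x theta.
  rewrite lt_neqAle hge0 andbT; apply/eqP => /esym /heq0; exact: xne.
set u := smul (h x theta)^-1 x.
have cu : convex_elt add smul u.
  move=> a b a0 b0; rewrite /u !smulM mulrDl; apply: cx; apply: mulr_ge0 => //;
  by rewrite invr_ge0 ltW.
have Pu : P u = u by have [y Py] := Psurj cu; rewrite -Py PP.
have hu : h u theta = 1.
  have := hsmul_pos (a := (h x theta)^-1) x theta.
  rewrite smulx0 -/u => ->; last by rewrite invr_ge0 ltW.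
  by rewrite mulVf // lt0r_neq0.
apply/eqP; rewrite eq_le; apply/andP; split.
- apply: ge_ereal_sup => _ [f Hf <-]; exact: final1 Hf.
- apply: ereal_sup_ubound; exists (f0 u); first exact: f0_H cu hu.
  rewrite (proj1 JrE) -EFinM; congr EFin; exact: part2 cu Pu hu.
Qed.
End Alg.

Theorem corollary1 (R : realType) (X : Type) (add : X -> X -> X)
    (smul : R -> X -> X) (theta : X) (h : X -> X -> R) (P : X -> X)
    (d : measure_display) (T : measurableType d) (r : T -> T -> R)
    (mu : {measure set T -> \bar R}) (omega : R -> R) (Q : set T) :
  L_space add smul theta h ->
  convexifying add smul h P ->
  is_metric r ->
  compact_r r setT ->
  (@measurable d T = <<s [set A | open_r r A] >>) ->
  (mu setT < +oo)%E ->
  modulus_of_continuity omega ->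
  compact_r r Q ->
  (0 < mu Q)%E ->
  (forall (t : T) (f : T -> X), H_omega r h omega f ->
     ((h (P (f t)) (smul (fine (mu Q))^-1 (Xintegral add smul theta h P mu Q f)))%:E
      <= ((fine (mu Q))^-1)%:E * \int[mu]_(s in Q) (omega (r t s))%:E)%E)
  /\
  (isotropic add h -> (exists x, convex_elt add smul x /\ x <> theta) ->
   forall t : T,
     ereal_sup [set (h (P (f t)) (smul (fine (mu Q))^-1
                      (Xintegral add smul theta h P mu Q f)))%:E
               | f in H_omega r h omega]
     = (((fine (mu Q))^-1)%:E * \int[mu]_(s in Q) (omega (r t s))%:E)%E).
Proof.
move=> [[[[addC addA add0 smul1] [smulD smulM smul0]] [hge0 heq0 hC htri] hcomp _] [hZ hT]].
move=> [Pconv Psurj PL PP Plin] [r0 req0 rC rtri] compT measE muT [om_mono om_cont om_ge0 om0 om_sub] compQ muQ0.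
have rzero : forall x y, r x y = 0 -> x = y by move=> x y /req0.
have rxx : forall x, r x x = 0 by move=> x; apply/req0.
split.
- move=> t f Hf.
  eapply final1; eassumption.
- move=> _ ex t.
  eapply final2; eassumption.
Qed.
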